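(* Let $a,b\in\mathbf R$ and $C\in\mathbf R^{1,1}$. Every maximally extended space-like curve $X$ in $\mathbf R^{1,1}$ satisfying $$a\langle X,T\rangle - b\langle X,N\rangle - \langle C,N\rangle = k$$ is an entire graph over the $x$-axis, i.e. of the form $y=y(x)$, $x\in\mathbf R$, with $|y'(x)|<1$.
   Context: $\mathbf R^{1,1}$ is $\mathbf R^2$ with $\langle (x_1,y_1),(x_2,y_2)\rangle = x_1x_2-y_1y_2$, points written $x+hy$ with $h^2=1$. A curve is space-like if $\langle X_u,X_u\rangle>0$. With arc-length $ds=\sqrt{\langle X_u,X_u\rangle}\,du$, $T=X_s$, $N=hT$ (the reflection of $T$ across the line $y=x$), and $k$ defined by $T_s=kN$. *)

(* Defs.v *)
From Stdlib Require Import Reals.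
From Coquelicot Require Import Coquelicot.
Open Scope R_scope.

(* Lorentz-Minkowski plane R^{1,1}: points (x,y) ~ x + h y. *)
Definition lor (p q : R * R) : R := fst p * fst q - snd p * snd q.

(* Multiplication by h: h (x + h y) = y + h x, i.e. reflection across y = x. *)
Definition hmul (v : R * R) : R * R := (snd v, fst v).

Definition in_ival (al be : Rbar) (s : R) : Prop :=
  Rbar_lt al (Finite s) /\ Rbar_lt (Finite s) be.

(* X is a space-like curve, parametrized by arc length on (al, be), with unit
   tangent T = X_s (<T,T> = 1), normal N = h T, curvature k given by T_s = k N,
   satisfying  a<X,T> - b<X,N> - <C,N> = k. *)
Definition sol_curve (a b : R) (C : R * R) (al be : Rbar)
  (X T : R -> R * R) (k : R -> R) : Prop :=
  Rbar_lt al be /\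
  forall s, in_ival al be s ->
    is_derive (fun t => fst (X t)) s (fst (T s)) /\
    is_derive (fun t => snd (X t)) s (snd (T s)) /\
    lor (T s) (T s) = 1 /\
    is_derive (fun t => fst (T t)) s (k s * fst (hmul (T s))) /\
    is_derive (fun t => snd (T t)) s (k s * snd (hmul (T s))) /\
    a * lor (X s) (T s) - b * lor (X s) (hmul (T s)) - lor C (hmul (T s)) = k s.

Definition maximal_sol (a b : R) (C : R * R) (al be : Rbar) (X : R -> R * R) : Prop :=
  ~ exists (al' be' : Rbar) (X' T' : R -> R * R) (k' : R -> R),
      sol_curve a b C al' be' X' T' k' /\
      Rbar_le al' al /\ Rbar_le be be' /\ (al' <> al \/ be' <> be) /\
      (forall s, in_ival al be s -> X' s = X s).

(* Main.v *)
Require Import Defs.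
From Stdlib Require Import Reals Lra Lia Classical IndefiniteDescription.
From Coquelicot Require Import Coquelicot.
Open Scope R_scope.

Lemma half_pow_small (e : R) : 0 < e -> exists n, (1/2)^n < e.
Proof.
  intros He. destruct (pow_lt_1_zero (1/2) ltac:(rewrite Rabs_pos_eq; lra) e He) as [N HN].
  exists N. specialize (HN N (Nat.le_refl _)). rewrite Rabs_pos_eq in HN; auto.
  apply pow_le; lra.
Qed.

Lemma geom_le (x y D : R) : (forall n, x <= y + D * (1/2)^n) -> x <= y.
Proof.
  intros H. destruct (Rle_or_lt x y) as [|Hlt]; auto. exfalso.
  destruct (Rle_or_lt D 0) as [HD|HD].
  - specialize (H O). simpl in H. lra.
  - destruct (half_pow_small ((x - y)/D)) as [n Hn].
    { apply Rdiv_lt_0_compat; lra. }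
    specialize (H n). apply (Rmult_lt_compat_l D) in Hn; auto.
    replace (D * ((x-y)/D)) with (x - y) in Hn by (field; lra). lra.
Qed.

Lemma half_pow_pos n : 0 < (1/2)^n.
Proof. apply pow_lt; lra. Qed.

Lemma half_pow_mono n m : (n <= m)%nat -> (1/2)^m <= (1/2)^n.
Proof.
  intros H. induction H; auto. lra. simpl. pose proof (half_pow_pos m). lra.
Qed.

Lemma telesc (u : nat -> R) (C : R) :
  (forall n, Rabs (u (S n) - u n) <= C * (1/2)^n) ->
  forall n m, Rabs (u (n + m)%nat - u n) <= 2 * C * (1/2)^n - 2 * C * (1/2)^(n+m).
Proof.
  intros H n m. induction m.
  - rewrite Nat.add_0_r. rewrite Rminus_diag, Rabs_R0. lra.
  - replace (n + S m)%nat with (S (n + m)) by lia.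
    eapply Rle_trans. 
    { replace (u (S (n+m)) - u n) with ((u (S (n+m)) - u (n+m)%nat) + (u (n+m)%nat - u n)) by ring.
      apply Rabs_triang. }
    specialize (H (n+m)%nat). simpl pow. lra.
Qed.

Lemma geom_lim (u : nat -> R) (C : R) :
  (forall n, Rabs (u (S n) - u n) <= C * (1/2)^n) ->
  is_lim_seq u (real (Lim_seq u)) /\
  forall n, Rabs (Lim_seq u - u n) <= 2 * C * (1/2)^n.
Proof.
  intros H.
  assert (HC : 0 <= C).
  { specialize (H O). simpl in H. pose proof (Rabs_pos (u 1%nat - u 0%nat)). lra. }
  assert (Hb : forall n m, (n <= m)%nat -> Rabs (u m - u n) <= 2 * C * (1/2)^n).
  { intros n m Hnm. replace m with (n + (m - n))%nat by lia.
    pose proof (telesc u C H n (m-n)). pose proof (half_pow_pos (n + (m-n))). nra. }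
  assert (Hex : ex_finite_lim_seq u).
  { apply ex_lim_seq_cauchy_corr. intros eps.
    destruct (half_pow_small (eps / (4 * C + 1))) as [N HN].
    { apply Rdiv_lt_0_compat; [apply cond_pos | lra]. }
    exists N. intros n m Hn Hm.
    assert (Hp : (1/2)^n <= (1/2)^N).
    { apply half_pow_mono; auto. }
    assert (Hq : (1/2)^m <= (1/2)^N) by (apply half_pow_mono; auto).
    assert (Hk : (4*C+1) * (1/2)^N < eps).
    { apply (Rmult_lt_compat_l (4*C+1)) in HN; [|lra].
      replace ((4 * C + 1) * (eps / (4 * C + 1))) with (pos eps) in HN by (field; lra). lra. }
    destruct (Nat.le_ge_cases n m) as [Hnm|Hnm].
    - specialize (Hb n m Hnm). rewrite Rabs_minus_sym. 
      pose proof (half_pow_pos N). nra.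
    - specialize (Hb m n Hnm). pose proof (half_pow_pos N). nra. }
  pose proof (Lim_seq_correct' u Hex) as Hl. split; [exact Hl|].
  intros n.
  destruct Hex as [l Hl']. pose proof (is_lim_seq_unique _ _ Hl') as E.
  rewrite E. rewrite E in Hl. simpl.
  apply Rabs_le. split.
  - assert (Rbar_le (u n - 2 * C * (1 / 2) ^ n) l).
    { apply (is_lim_seq_le_loc (fun _ => u n - 2 * C * (1/2)^n) u); auto.
      - exists n. intros m Hm. specialize (Hb n m Hm). apply Rabs_le_between' in Hb. lra.
      - apply is_lim_seq_const. }
    simpl in H0. lra.
  - assert (Rbar_le l (u n + 2 * C * (1 / 2) ^ n)).
    { apply (is_lim_seq_le_loc u (fun _ => u n + 2 * C * (1/2)^n)); auto.
      - exists n. intros m Hm. specialize (Hb n m Hm). apply Rabs_le_between' in Hb. lra.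
      - apply is_lim_seq_const. }
    simpl in H0. lra.
Qed.

Lemma lip_cont (f : R -> R) (L : R) :
  (forall x y, Rabs (f x - f y) <= L * Rabs (x - y)) -> forall x, continuous f x.
Proof.
  intros H x. apply continuity_pt_filterlim.
  intros e He. exists (e / (Rabs L + 1)). split.
  { apply Rdiv_lt_0_compat; auto. pose proof (Rabs_pos L); lra. }
  intros y [_ Hy]. simpl in *. unfold R_dist in *.
  eapply Rle_lt_trans. apply H.
  pose proof (Rabs_pos L). pose proof (Rle_abs L). pose proof (Rabs_pos (y - x)).
  apply (Rmult_lt_compat_l (Rabs L + 1)) in Hy; [|lra].
  replace ((Rabs L + 1) * (e / (Rabs L + 1))) with e in Hy by (field; lra). nra.
Qed.

Lemma mono_deriv (f df : R -> R) (a b : R) : a <= b ->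
  (forall x, a <= x <= b -> is_derive f x (df x) /\ 0 <= df x) -> f a <= f b.
Proof.
  intros Hab Hd.
  destruct (MVT_gen f a b df) as [c [Hc1 Hc2]].
  - intros x Hx. rewrite Rmin_left, Rmax_right in Hx by lra. apply Hd; lra.
  - intros x Hx. rewrite Rmin_left, Rmax_right in Hx by lra.
    apply continuity_pt_filterlim. apply (ex_derive_continuous f).
    exists (df x). apply Hd; lra.
  - rewrite Rmin_left, Rmax_right in Hc1 by lra.
    destruct (Hd c Hc1). nra.
Qed.

Definition RI (f : R -> R) (a b : R) : R := RInt f a b.

Definition inbox (z0 z : nat -> R) := forall i, (i < 4)%nat -> Rabs (z i - z0 i) <= 1.
Definition clamp (t0 h t : R) := Rmax t0 (Rmin (t0 + h) t).

Lemma clamp_range t0 h t : 0 <= h -> t0 <= clamp t0 h t <= t0 + h.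
Proof. intros. unfold clamp. unfold Rmax, Rmin. repeat destruct Rle_dec; lra. Qed.

Lemma clamp_lip t0 h t s : 0 <= h -> Rabs (clamp t0 h t - clamp t0 h s) <= Rabs (t - s).
Proof.
  intros. unfold clamp, Rmax, Rmin. apply Rabs_le.
  pose proof (Rle_abs (t - s)). pose proof (Rle_abs (-(t - s))). rewrite Rabs_Ropp in H1.
  repeat destruct Rle_dec; lra.
Qed.

Lemma clamp_in t0 h t : t0 <= t <= t0 + h -> clamp t0 h t = t.
Proof. intros. unfold clamp, Rmax, Rmin. repeat destruct Rle_dec; lra. Qed.

Lemma RInt_abs_le (f : R -> R) a b M : ex_RInt f a b -> (forall t, Rmin a b <= t <= Rmax a b -> Rabs (f t) <= M) ->
  Rabs (RInt f a b) <= Rabs (b - a) * M.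
Proof.
  intros He Hb. destruct (Rle_or_lt a b).
  - rewrite (Rabs_pos_eq (b - a)) by lra. apply abs_RInt_le_const; auto.
    intros t Ht. apply Hb. rewrite Rmin_left, Rmax_right; lra.
  - rewrite <- (opp_RInt_swap f b a (ex_RInt_swap _ _ _ He)). change (opp (RInt f b a)) with (- RInt f b a).
    rewrite Rabs_Ropp. rewrite (Rabs_left (b - a)) by lra. replace (- (b - a)) with (a - b) by ring.
    apply abs_RInt_le_const; try lra. apply ex_RInt_swap; auto.
    intros t Ht. apply Hb. rewrite Rmin_right, Rmax_left; lra.
Qed.

Lemma Rabs3 a b c : Rabs (a + b - c) <= Rabs a + Rabs b + Rabs c.
Proof.
  unfold Rminus. eapply Rle_trans. apply Rabs_triang. rewrite Rabs_Ropp.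
  pose proof (Rabs_triang a b). lra.
Qed.

Section Picard.
Variable F : (nat -> R) -> (nat -> R).
Variable z0 : nat -> R.
Variables t0 h M L : R.
Hypothesis Hh : 0 < h.
Hypothesis HM : 0 <= M.
Hypothesis HL : 0 <= L.
Hypothesis HLh : L * h <= 1/2.
Hypothesis HMh : M * h <= 1.
Hypothesis HFb : forall z, inbox z0 z -> forall i, (i < 4)%nat -> Rabs (F z i) <= M.
Hypothesis HFl : forall z w d, inbox z0 z -> inbox z0 w ->
  (forall j, (j < 4)%nat -> Rabs (z j - w j) <= d) ->
  forall i, (i < 4)%nat -> Rabs (F z i - F w i) <= L * d.

Definition Inv (psi : R -> nat -> R) :=
  (forall t, inbox z0 (psi t)) /\
  (forall t s i, (i < 4)%nat -> Rabs (psi t i - psi s i) <= M * Rabs (t - s)).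

Definition nextp (psi : R -> nat -> R) : R -> nat -> R :=
  fun t i => z0 i + RI (fun u => F (psi u) i) t0 (clamp t0 h t).

Lemma comp_cont psi : Inv psi -> forall i, (i < 4)%nat -> forall x, continuous (fun u => F (psi u) i) x.
Proof.
  intros [Hb Hl] i Hi. apply (lip_cont _ (L * M)). intros x y.
  rewrite Rmult_assoc. apply HFl; auto.
Qed.

Lemma comp_ex psi : Inv psi -> forall i, (i < 4)%nat -> forall a b, ex_RInt (fun u => F (psi u) i) a b.
Proof.
  intros HI i Hi a b. apply (ex_RInt_continuous (V:=R_CompleteNormedModule)). intros. apply comp_cont; auto.
Qed.

Lemma next_inv psi : Inv psi -> Inv (nextp psi).
Proof.
  intros HI. pose proof HI as [Hb Hl]. split.
  - intros t i Hi. unfold nextp. replace (z0 i + _ - z0 i) with (RI (fun u => F (psi u) i) t0 (clamp t0 h t)) by ring. unfold RI.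
    eapply Rle_trans. apply RInt_abs_le. apply comp_ex; auto.
    intros. apply HFb; auto.
    pose proof (clamp_range t0 h t ltac:(lra)). rewrite (Rabs_pos_eq (clamp t0 h t - t0)) by lra. nra.
  - intros t s i Hi. unfold nextp.
    pose proof (RInt_Chasles (fun u => F (psi u) i) t0 (clamp t0 h s) (clamp t0 h t)
      (comp_ex psi HI i Hi _ _) (comp_ex psi HI i Hi _ _)) as E.
    change (plus ?x ?y) with (x + y) in E.
    replace (z0 i + RI (fun u : R => F (psi u) i) t0 (clamp t0 h t) -
      (z0 i + RI (fun u : R => F (psi u) i) t0 (clamp t0 h s))) with
      (RI (fun u => F (psi u) i) (clamp t0 h s) (clamp t0 h t)) by (unfold RI in *; lra). unfold RI.
    eapply Rle_trans. apply RInt_abs_le. apply comp_ex; auto.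
    intros. apply HFb; auto.
    pose proof (clamp_lip t0 h t s ltac:(lra)). rewrite Rmult_comm. apply Rmult_le_compat_l; auto.
Qed.

Lemma next_contr psi chi d : Inv psi -> Inv chi ->
  (forall t i, (i < 4)%nat -> Rabs (psi t i - chi t i) <= d) ->
  forall t i, (i < 4)%nat -> Rabs (nextp psi t i - nextp chi t i) <= L * h * d.
Proof.
  intros Hp Hc Hd t i Hi. unfold nextp.
  assert (Hd0 : 0 <= d) by (specialize (Hd t0 0%nat ltac:(lia)); pose proof (Rabs_pos (psi t0 0%nat - chi t0 0%nat)); lra).
  pose proof (RInt_minus (fun u => F (psi u) i) (fun u => F (chi u) i) t0 (clamp t0 h t)
    (comp_ex psi Hp i Hi _ _) (comp_ex chi Hc i Hi _ _)) as E.
  change (minus ?x ?y) with (x - y) in E.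
  replace (z0 i + RI (fun u : R => F (psi u) i) t0 (clamp t0 h t) -
      (z0 i + RI (fun u : R => F (chi u) i) t0 (clamp t0 h t))) with
     (RI (fun u => F (psi u) i - F (chi u) i) t0 (clamp t0 h t)).
  2:{ unfold RI. rewrite E. ring. } unfold RI.
  eapply Rle_trans. apply RInt_abs_le.
  { apply (ex_RInt_minus (V:=R_NormedModule)); apply comp_ex; auto. }
  intros u _. apply HFl; auto. apply Hp. apply Hc.
  pose proof (clamp_range t0 h t ltac:(lra)). rewrite (Rabs_pos_eq (clamp t0 h t - t0)) by lra.
  apply Rle_trans with (h * (L * d)). apply Rmult_le_compat_r. apply Rmult_le_pos; lra. lra. lra.
Qed.

Fixpoint pic (n : nat) : R -> nat -> R :=
  match n with O => fun _ => z0 | S n => nextp (pic n) end.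

Lemma pic_inv n : Inv (pic n).
Proof.
  induction n.
  - split. intros t i Hi. simpl. rewrite Rminus_diag, Rabs_R0; lra.
    intros. simpl. rewrite Rminus_diag, Rabs_R0. pose proof (Rabs_pos (t - s)). nra.
  - simpl. apply next_inv; auto.
Qed.

Lemma pic_diff n : forall t i, (i < 4)%nat -> Rabs (pic (S n) t i - pic n t i) <= 2 * (1/2)^n.
Proof.
  induction n; intros t i Hi.
  - simpl pic. destruct (pic_inv 1) as [Hb _]. specialize (Hb t i Hi). simpl in Hb. simpl. lra.
  - eapply Rle_trans. apply (next_contr (pic (S n)) (pic n) (2*(1/2)^n) (pic_inv (S n)) (pic_inv n) IHn t i Hi).
    simpl. pose proof (half_pow_pos n). nra.
Qed.

Definition phi (t : R) (i : nat) : R := real (Lim_seq (fun n => pic n t i)).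

Lemma phi_close t i n : (i < 4)%nat -> Rabs (phi t i - pic n t i) <= 4 * (1/2)^n.
Proof.
  intros Hi. destruct (geom_lim (fun n => pic n t i) 2) as [_ H].
  intros m. apply pic_diff; auto.
  specialize (H n). unfold phi. lra.
Qed.

Lemma phi_inv : Inv phi.
Proof.
  split.
  - intros t i Hi. apply (geom_le _ _ 4). intros n.
    pose proof (phi_close t i n Hi). destruct (pic_inv n) as [Hb _]. specialize (Hb t i Hi).
    eapply Rle_trans. 2:{ apply Rplus_le_compat. exact Hb. exact H. }
    replace (phi t i - z0 i) with ((pic n t i - z0 i) + (phi t i - pic n t i)) by ring. apply Rabs_triang.
  - intros t s i Hi. apply (geom_le _ _ 8). intros n.
    pose proof (phi_close t i n Hi). pose proof (phi_close s i n Hi).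
    destruct (pic_inv n) as [_ Hl]. specialize (Hl t s i Hi).
    replace (phi t i - phi s i) with ((phi t i - pic n t i) + (pic n t i - pic n s i) - (phi s i - pic n s i)) by ring.
    eapply Rle_trans. apply Rabs3. lra.
Qed.

Lemma phi_fix t i : (i < 4)%nat -> phi t i = nextp phi t i.
Proof.
  intros Hi. assert (Rabs (phi t i - nextp phi t i) <= 0).
  { apply (geom_le _ _ 4). intros n.
    pose proof (phi_close t i (S n) Hi).
    pose proof (next_contr (pic n) phi (4 * (1/2)^n) (pic_inv n) phi_inv
      (fun t i Hi => ltac:(rewrite Rabs_minus_sym; apply phi_close; auto)) t i Hi).
    simpl pic in H.
    replace (phi t i - nextp phi t i) with ((phi t i - nextp (pic n) t i) + (nextp (pic n) t i - nextp phi t i)) by ring.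
    eapply Rle_trans. apply Rabs_triang. simpl in H. pose proof (half_pow_pos n). nra. }
  pose proof (Rabs_pos (phi t i - nextp phi t i)). 
  assert (Rabs (phi t i - nextp phi t i) = 0) by lra.
  apply Rabs_eq_0 in H1. lra.
Qed.

Lemma phi_start i : (i < 4)%nat -> phi t0 i = z0 i.
Proof.
  intros Hi. rewrite phi_fix; auto. unfold nextp, RI. rewrite clamp_in by lra.
  rewrite RInt_point. change (@zero R_CompleteNormedModule) with 0. ring.
Qed.

Lemma phi_deriv t i : (i < 4)%nat -> t0 < t < t0 + h ->
  is_derive (fun u => phi u i) t (F (phi t) i).
Proof.
  intros Hi Ht.
  apply (is_derive_ext_loc (fun u => z0 i + RInt (fun v => F (phi v) i) t0 u)).
  { apply (locally_interval _ t t0 (t0 + h)); simpl; try lra.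
    intros y Hy1 Hy2. rewrite (phi_fix y i Hi). unfold nextp, RI. rewrite clamp_in; lra. }
  assert (H : is_derive (fun u => RInt (fun v => F (phi v) i) t0 u) t (F (phi t) i)).
  { apply (is_derive_RInt (V:=R_CompleteNormedModule) (fun v => F (phi v) i) _ t0).
    - apply filter_forall. intros. apply RInt_correct. apply comp_ex; auto. apply phi_inv.
    - apply comp_cont; auto. apply phi_inv. }
  pose proof (is_derive_plus _ _ _ _ _ (is_derive_const (z0 i) t) H) as H2.
  rewrite plus_zero_l in H2. exact H2.
Qed.
End Picard.

Lemma picard (F : (nat -> R) -> (nat -> R)) (z0 : nat -> R) (t0 h M L : R) :
  0 < h -> 0 <= M -> 0 <= L -> L * h <= 1/2 -> M * h <= 1 ->
  (forall z, inbox z0 z -> forall i, (i < 4)%nat -> Rabs (F z i) <= M) ->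
  (forall z w d, inbox z0 z -> inbox z0 w ->
    (forall j, (j < 4)%nat -> Rabs (z j - w j) <= d) ->
    forall i, (i < 4)%nat -> Rabs (F z i - F w i) <= L * d) ->
  exists ph : (R -> nat -> R),
    (forall t, inbox z0 (ph t)) /\
    (forall t s i, (i < 4)%nat -> Rabs (ph t i - ph s i) <= M * Rabs (t - s)) /\
    (forall i, (i < 4)%nat -> ph t0 i = z0 i) /\
    (forall t i, (i < 4)%nat -> t0 < t < t0 + h -> is_derive (fun u => ph u i) t (F (ph t) i)).
Proof.
  intros. exists (phi F z0 t0 h). destruct (phi_inv F z0 t0 h M L) as [H6 H7]; auto.
  split; auto. split; auto. split.
  - intros. apply (phi_start F z0 t0 h M L); auto.
  - intros. apply (phi_deriv F z0 t0 h M L); auto.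
Qed.

Definition kf (a b c1 c2 : R) (z : nat -> R) : R :=
  a * (z 0%nat * z 2%nat - z 1%nat * z 3%nat) - b * (z 0%nat * z 3%nat - z 1%nat * z 2%nat)
  - (c1 * z 3%nat - c2 * z 2%nat).

Definition Fs (a b c1 c2 : R) (z : nat -> R) (i : nat) : R :=
  match i with
  | 0%nat => z 2%nat
  | 1%nat => z 3%nat
  | 2%nat => kf a b c1 c2 z * z 3%nat
  | _ => kf a b c1 c2 z * z 2%nat
  end.

Lemma abs_mul_le x y Sx Sy : Rabs x <= Sx -> Rabs y <= Sy -> Rabs (x * y) <= Sx * Sy.
Proof.
  intros. rewrite Rabs_mult. apply Rmult_le_compat; auto; apply Rabs_pos.
Qed.

Lemma prod_lip x y x' y' S d : Rabs x <= S -> Rabs y' <= S -> Rabs (x - x') <= d -> Rabs (y - y') <= d ->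
  Rabs (x * y - x' * y') <= 2 * S * d.
Proof.
  intros. replace (x * y - x' * y') with (x * (y - y') + y' * (x - x')) by ring.
  eapply Rle_trans. apply Rabs_triang.
  pose proof (abs_mul_le _ _ _ _ H H2). pose proof (abs_mul_le _ _ _ _ H0 H1). lra.
Qed.

Lemma box_comp z0 z R i : (forall j, (j < 4)%nat -> Rabs (z0 j) <= R) -> inbox z0 z -> (i < 4)%nat ->
  Rabs (z i) <= R + 1.
Proof.
  intros H1 H2 Hi. specialize (H1 i Hi). specialize (H2 i Hi).
  replace (z i) with (z0 i + (z i - z0 i)) by ring. eapply Rle_trans. apply Rabs_triang. lra.
Qed.

Lemma kf_bound a b c1 c2 z S : 0 <= S -> (forall j, (j < 4)%nat -> Rabs (z j) <= S) ->
  Rabs (kf a b c1 c2 z) <= (Rabs a + Rabs b) * (2 * (S * S)) + (Rabs c1 + Rabs c2) * S.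
Proof.
  intros HS H. unfold kf.
  pose proof (H 0%nat ltac:(lia)). pose proof (H 1%nat ltac:(lia)).
  pose proof (H 2%nat ltac:(lia)). pose proof (H 3%nat ltac:(lia)).
  assert (E1 : Rabs (z 0%nat * z 2%nat - z 1%nat * z 3%nat) <= 2 * (S * S)).
  { unfold Rminus. eapply Rle_trans. apply Rabs_triang. rewrite Rabs_Ropp.
    pose proof (abs_mul_le _ _ _ _ H0 H2). pose proof (abs_mul_le _ _ _ _ H1 H3). lra. }
  assert (E2 : Rabs (z 0%nat * z 3%nat - z 1%nat * z 2%nat) <= 2 * (S * S)).
  { unfold Rminus. eapply Rle_trans. apply Rabs_triang. rewrite Rabs_Ropp.
    pose proof (abs_mul_le _ _ _ _ H0 H3). pose proof (abs_mul_le _ _ _ _ H1 H2). lra. }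
  assert (E3 : Rabs (c1 * z 3%nat - c2 * z 2%nat) <= (Rabs c1 + Rabs c2) * S).
  { unfold Rminus. eapply Rle_trans. apply Rabs_triang. rewrite Rabs_Ropp.
    pose proof (abs_mul_le _ _ _ _ (Rle_refl (Rabs c1)) H3).
    pose proof (abs_mul_le _ _ _ _ (Rle_refl (Rabs c2)) H2). lra. }
  unfold Rminus. eapply Rle_trans. apply Rabs_triang. rewrite Rabs_Ropp.
  eapply Rle_trans. apply Rplus_le_compat_r. apply Rabs_triang. rewrite Rabs_Ropp.
  pose proof (abs_mul_le _ _ _ _ (Rle_refl (Rabs a)) E1).
  pose proof (abs_mul_le _ _ _ _ (Rle_refl (Rabs b)) E2). unfold Rminus in *. lra.
Qed.

Lemma kf_lip a b c1 c2 z w S d : 0 <= S -> (forall j, (j < 4)%nat -> Rabs (z j) <= S) ->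
  (forall j, (j < 4)%nat -> Rabs (w j) <= S) ->
  (forall j, (j < 4)%nat -> Rabs (z j - w j) <= d) ->
  Rabs (kf a b c1 c2 z - kf a b c1 c2 w) <= ((Rabs a + Rabs b) * (4 * S) + (Rabs c1 + Rabs c2)) * d.
Proof.
  intros HS Hz Hw Hd. unfold kf.
  pose proof (Hz 0%nat ltac:(lia)). pose proof (Hz 1%nat ltac:(lia)).
  pose proof (Hz 2%nat ltac:(lia)). pose proof (Hz 3%nat ltac:(lia)).
  pose proof (Hw 0%nat ltac:(lia)). pose proof (Hw 1%nat ltac:(lia)).
  pose proof (Hw 2%nat ltac:(lia)). pose proof (Hw 3%nat ltac:(lia)).
  pose proof (Hd 0%nat ltac:(lia)). pose proof (Hd 1%nat ltac:(lia)).
  pose proof (Hd 2%nat ltac:(lia)). pose proof (Hd 3%nat ltac:(lia)).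
  set (x0 := z 0%nat) in *; set (x1 := z 1%nat) in *; set (x2 := z 2%nat) in *; set (x3 := z 3%nat) in *.
  set (y0 := w 0%nat) in *; set (y1 := w 1%nat) in *; set (y2 := w 2%nat) in *; set (y3 := w 3%nat) in *.
  assert (E1 : Rabs ((x0 * x2 - x1 * x3) - (y0 * y2 - y1 * y3)) <= 4 * S * d).
  { replace ((x0 * x2 - x1 * x3) - (y0 * y2 - y1 * y3)) with ((x0 * x2 - y0 * y2) - (x1 * x3 - y1 * y3)) by ring.
    unfold Rminus at 1. eapply Rle_trans. apply Rabs_triang. rewrite Rabs_Ropp.
    pose proof (prod_lip x0 x2 y0 y2 S d H H5 H7 H9).
    pose proof (prod_lip x1 x3 y1 y3 S d H0 H6 H8 H10). lra. }
  assert (E2 : Rabs ((x0 * x3 - x1 * x2) - (y0 * y3 - y1 * y2)) <= 4 * S * d).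
  { replace ((x0 * x3 - x1 * x2) - (y0 * y3 - y1 * y2)) with ((x0 * x3 - y0 * y3) - (x1 * x2 - y1 * y2)) by ring.
    unfold Rminus at 1. eapply Rle_trans. apply Rabs_triang. rewrite Rabs_Ropp.
    pose proof (prod_lip x0 x3 y0 y3 S d H H6 H7 H10).
    pose proof (prod_lip x1 x2 y1 y2 S d H0 H5 H8 H9). lra. }
  assert (E3 : Rabs ((c1 * x3 - c2 * x2) - (c1 * y3 - c2 * y2)) <= (Rabs c1 + Rabs c2) * d).
  { replace ((c1 * x3 - c2 * x2) - (c1 * y3 - c2 * y2)) with (c1 * (x3 - y3) - c2 * (x2 - y2)) by ring.
    unfold Rminus at 1. eapply Rle_trans. apply Rabs_triang. rewrite Rabs_Ropp.
    pose proof (abs_mul_le _ _ _ _ (Rle_refl (Rabs c1)) H10).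
    pose proof (abs_mul_le _ _ _ _ (Rle_refl (Rabs c2)) H9). lra. }
  replace (a * (x0 * x2 - x1 * x3) - b * (x0 * x3 - x1 * x2) - (c1 * x3 - c2 * x2) -
   (a * (y0 * y2 - y1 * y3) - b * (y0 * y3 - y1 * y2) - (c1 * y3 - c2 * y2))) with
   (a * ((x0 * x2 - x1 * x3) - (y0 * y2 - y1 * y3)) - b * ((x0 * x3 - x1 * x2) - (y0 * y3 - y1 * y2))
    - ((c1 * x3 - c2 * x2) - (c1 * y3 - c2 * y2))) by ring.
  unfold Rminus at 1. eapply Rle_trans. apply Rabs_triang. rewrite Rabs_Ropp.
  unfold Rminus at 1. eapply Rle_trans. apply Rplus_le_compat_r. apply Rabs_triang. rewrite Rabs_Ropp.
  pose proof (abs_mul_le _ _ _ _ (Rle_refl (Rabs a)) E1).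
  pose proof (abs_mul_le _ _ _ _ (Rle_refl (Rabs b)) E2). nra.
Qed.

Definition Kb a b c1 c2 S := (Rabs a + Rabs b) * (2 * (S * S)) + (Rabs c1 + Rabs c2) * S.
Definition Lk a b c1 c2 S := (Rabs a + Rabs b) * (4 * S) + (Rabs c1 + Rabs c2).
Definition Mc a b c1 c2 R := (R + 1) + Kb a b c1 c2 (R + 1) * (R + 1).
Definition Lc a b c1 c2 R := 1 + Kb a b c1 c2 (R + 1) + (R + 1) * Lk a b c1 c2 (R + 1).

Lemma Kb_nonneg a b c1 c2 S : 0 <= S -> 0 <= Kb a b c1 c2 S.
Proof. intros. unfold Kb. pose proof (Rabs_pos a). pose proof (Rabs_pos b).
  pose proof (Rabs_pos c1). pose proof (Rabs_pos c2). nra. Qed.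
Lemma Lk_nonneg a b c1 c2 S : 0 <= S -> 0 <= Lk a b c1 c2 S.
Proof. intros. unfold Lk. pose proof (Rabs_pos a). pose proof (Rabs_pos b).
  pose proof (Rabs_pos c1). pose proof (Rabs_pos c2). nra. Qed.

Lemma Fs_bound a b c1 c2 R z0 z : 0 <= R -> (forall j, (j < 4)%nat -> Rabs (z0 j) <= R) -> inbox z0 z ->
  forall i, (i < 4)%nat -> Rabs (Fs a b c1 c2 z i) <= Mc a b c1 c2 R.
Proof.
  intros HR H0 Hb i Hi.
  assert (HS : forall j, (j < 4)%nat -> Rabs (z j) <= R + 1) by (intros; eapply box_comp; eauto).
  pose proof (kf_bound a b c1 c2 z (R+1) ltac:(lra) HS) as Hk. fold (Kb a b c1 c2 (R+1)) in Hk.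
  pose proof (Kb_nonneg a b c1 c2 (R+1) ltac:(lra)).
  unfold Mc. destruct i as [|[|[|[|]]]]; simpl; try lia.
  - pose proof (HS 2%nat ltac:(lia)). nra.
  - pose proof (HS 3%nat ltac:(lia)). nra.
  - pose proof (abs_mul_le _ _ _ _ Hk (HS 3%nat ltac:(lia))). lra.
  - pose proof (abs_mul_le _ _ _ _ Hk (HS 2%nat ltac:(lia))). lra.
Qed.

Lemma Fs_lip a b c1 c2 R z0 z w d : 0 <= R -> (forall j, (j < 4)%nat -> Rabs (z0 j) <= R) ->
  inbox z0 z -> inbox z0 w -> (forall j, (j < 4)%nat -> Rabs (z j - w j) <= d) ->
  forall i, (i < 4)%nat -> Rabs (Fs a b c1 c2 z i - Fs a b c1 c2 w i) <= Lc a b c1 c2 R * d.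
Proof.
  intros HR H0 Hz Hw Hd i Hi.
  assert (HSz : forall j, (j < 4)%nat -> Rabs (z j) <= R + 1) by (intros; eapply box_comp; eauto).
  assert (HSw : forall j, (j < 4)%nat -> Rabs (w j) <= R + 1) by (intros; eapply box_comp; eauto).
  assert (Hd0 : 0 <= d) by (pose proof (Hd 0%nat ltac:(lia)); pose proof (Rabs_pos (z 0%nat - w 0%nat)); lra).
  pose proof (kf_bound a b c1 c2 z (R+1) ltac:(lra) HSz) as Hk. fold (Kb a b c1 c2 (R+1)) in Hk.
  pose proof (kf_lip a b c1 c2 z w (R+1) d ltac:(lra) HSz HSw Hd) as Hl. fold (Lk a b c1 c2 (R+1)) in Hl.
  pose proof (Kb_nonneg a b c1 c2 (R+1) ltac:(lra)). pose proof (Lk_nonneg a b c1 c2 (R+1) ltac:(lra)).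
  assert (0 <= Kb a b c1 c2 (R + 1) * d) by (apply Rmult_le_pos; auto).
  assert (0 <= (R + 1) * Lk a b c1 c2 (R + 1) * d) by (apply Rmult_le_pos; auto; apply Rmult_le_pos; auto; lra).
  unfold Lc. destruct i as [|[|[|[|]]]]; simpl; try lia.
  - pose proof (Hd 2%nat ltac:(lia)). lra.
  - pose proof (Hd 3%nat ltac:(lia)). lra.
  - set (K := kf a b c1 c2 z) in *. set (K' := kf a b c1 c2 w) in *.
    replace (K * z 3%nat - K' * w 3%nat) with (K * (z 3%nat - w 3%nat) + w 3%nat * (K - K')) by ring.
    eapply Rle_trans. apply Rabs_triang.
    pose proof (abs_mul_le _ _ _ _ Hk (Hd 3%nat ltac:(lia))).
    pose proof (abs_mul_le _ _ _ _ (HSw 3%nat ltac:(lia)) Hl). nra.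
  - set (K := kf a b c1 c2 z) in *. set (K' := kf a b c1 c2 w) in *.
    replace (K * z 2%nat - K' * w 2%nat) with (K * (z 2%nat - w 2%nat) + w 2%nat * (K - K')) by ring.
    eapply Rle_trans. apply Rabs_triang.
    pose proof (abs_mul_le _ _ _ _ Hk (Hd 2%nat ltac:(lia))).
    pose proof (abs_mul_le _ _ _ _ (HSw 2%nat ltac:(lia)) Hl). nra.
Qed.

Lemma uniq (F : (nat -> R) -> nat -> R) z0 L (psi chi : R -> nat -> R) t0 t1 :
  0 <= L -> L * (t1 - t0) <= 1/2 -> t0 <= t1 ->
  (forall z w d, inbox z0 z -> inbox z0 w -> (forall j, (j < 4)%nat -> Rabs (z j - w j) <= d) ->
     forall i, (i < 4)%nat -> Rabs (F z i - F w i) <= L * d) ->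
  (forall t, t0 <= t <= t1 -> inbox z0 (psi t) /\ inbox z0 (chi t)) ->
  (forall i, (i < 4)%nat -> psi t0 i = chi t0 i) ->
  (forall t i, (i < 4)%nat -> t0 < t < t1 ->
     is_derive (fun u => psi u i) t (F (psi t) i) /\ is_derive (fun u => chi u i) t (F (chi t) i)) ->
  (forall t i, (i < 4)%nat -> t0 <= t <= t1 -> continuity_pt (fun u => psi u i - chi u i) t) ->
  forall t i, (i < 4)%nat -> t0 <= t <= t1 -> psi t i = chi t i.
Proof.
  intros HL HLt Ht01 Hlip Hbox H0 Hder Hcont.
  assert (Hn : forall n t i, (i < 4)%nat -> t0 <= t <= t1 -> Rabs (psi t i - chi t i) <= 2 * (1/2)^n).
  { induction n; intros t i Hi Ht.
    - destruct (Hbox t Ht) as [B1 B2]. specialize (B1 i Hi). specialize (B2 i Hi).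
      replace (psi t i - chi t i) with ((psi t i - z0 i) - (chi t i - z0 i)) by ring.
      unfold Rminus at 1. eapply Rle_trans. apply Rabs_triang. rewrite Rabs_Ropp. simpl. lra.
    - destruct (MVT_gen (fun u => psi u i - chi u i) t0 t (fun c => F (psi c) i - F (chi c) i)) as [c [Hc Hm]].
      + intros x Hx. rewrite Rmin_left, Rmax_right in Hx by lra.
        destruct (Hder x i Hi ltac:(lra)) as [D1 D2].
        apply (is_derive_minus (fun u => psi u i) (fun u => chi u i)); auto.
      + intros x Hx. rewrite Rmin_left, Rmax_right in Hx by lra. apply Hcont; auto; lra.
      + rewrite Rmin_left, Rmax_right in Hc by lra.
        rewrite (H0 i Hi), Rminus_diag, Rminus_0_r in Hm. simpl in Hm. rewrite Hm.
        destruct (Hbox c ltac:(lra)) as [B1 B2].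
        assert (Hf : Rabs (F (psi c) i - F (chi c) i) <= L * (2 * (1/2)^n)).
        { apply Hlip; auto. intros j Hj. apply IHn; auto. lra. }
        rewrite Rabs_mult. rewrite (Rabs_pos_eq (t - t0)) by lra.
        pose proof (Rabs_pos (F (psi c) i - F (chi c) i)). pose proof (half_pow_pos n).
        simpl. nra. }
  intros t i Hi Ht. assert (Rabs (psi t i - chi t i) <= 0).
  { apply (geom_le _ _ 2). intros n. specialize (Hn n t i Hi Ht). lra. }
  pose proof (Rabs_pos (psi t i - chi t i)).
  assert (E : Rabs (psi t i - chi t i) = 0) by lra. apply Rabs_eq_0 in E. lra.
Qed.

Lemma isd_plus f g x df dg : is_derive f x df -> is_derive g x dg -> is_derive (fun y => f y + g y) x (df + dg).
Proof. intros H1 H2. apply is_derive_Reals. apply (derivable_pt_lim_plus f g); apply is_derive_Reals; auto. Qed.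
Lemma isd_minus f g x df dg : is_derive f x df -> is_derive g x dg -> is_derive (fun y => f y - g y) x (df - dg).
Proof. intros H1 H2. apply is_derive_Reals. apply (derivable_pt_lim_minus f g); apply is_derive_Reals; auto. Qed.
Lemma isd_mult f g x df dg : is_derive f x df -> is_derive g x dg -> is_derive (fun y => f y * g y) x (df * g x + f x * dg).
Proof. intros H1 H2. apply is_derive_Reals. apply (derivable_pt_lim_mult f g); apply is_derive_Reals; auto. Qed.
Lemma isd_id x : is_derive (fun y => y) x 1.
Proof. apply is_derive_Reals. apply derivable_pt_lim_id. Qed.
Lemma isd_const (c x : R) : is_derive (fun _ => c) x 0.
Proof. apply is_derive_Reals. apply derivable_pt_lim_const. Qed.

Lemma abs_split x y : Rabs x <= y -> - y <= x <= y.
Proof. intros H. pose proof (Rle_abs x). pose proof (Rle_abs (-x)). rewrite Rabs_Ropp in H1. lra. Qed.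

Lemma exp_le_mono x y : x <= y -> exp x <= exp y.
Proof. intros [H|H]. left; apply exp_increasing; auto. subst; lra. Qed.

Lemma small_bound (Q dQ V : R -> R) (A K0 sb B : R) :
  sb < B -> 0 < A -> 0 <= K0 ->
  (forall t, sb <= t < B -> 0 < Q t /\ is_derive Q t (dQ t) /\ Rabs (dQ t) <= A * (Q t ^ 2 + 1)
     /\ is_derive V t (/ Q t) /\ Rabs (V t) <= K0) ->
  forall t1, sb + Rmin (/(8*A)) ((B - sb)/2) <= t1 < B ->
  Rmin 1 (2 * A * Rmin (/(8*A)) ((B - sb)/2) * exp (-(8 * A * K0))) <= Q t1.
Proof.
  intros Hsb HA HK H t1 Ht1.
  set (d := Rmin (/(8*A)) ((B - sb)/2)) in *.
  assert (Hd1 : d <= /(8*A)) by apply Rmin_l.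
  assert (Hd0 : 0 < d).
  { unfold d, Rmin. destruct Rle_dec. apply Rinv_0_lt_compat; lra. lra. }
  assert (HAd : A * d <= 1/8).
  { apply (Rmult_le_compat_l A) in Hd1; try lra. rewrite Rinv_mult in Hd1.
    replace (A * (/8 * /A)) with (/8) in Hd1 by (field; lra). lra. }
  set (Q1 := Q t1).
  destruct (Rlt_or_le Q1 1) as [HQ1|HQ1].
  2:{ eapply Rle_trans. apply Rmin_l. auto. }
  eapply Rle_trans. apply Rmin_r.
  destruct (H t1 ltac:(lra)) as [HQ1p _]. fold Q1 in HQ1p.
  assert (Sa : forall t, t1 - d <= t <= t1 -> / (1 + Q t) >= / (1 + Q1) - A * (t1 - t)).
  { intros t Ht.
    assert (M : A * t - / (1 + Q t) <= A * t1 - / (1 + Q t1)).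
    { apply (mono_deriv (fun u => A * u - / (1 + Q u)) (fun u => A - (- dQ u / (1 + Q u)^2))); [lra|].
      intros x Hx. destruct (H x ltac:(lra)) as [Hp [Hdq [Hb _]]]. split.
      - apply isd_minus. replace A with (A * 1) at 2 by ring. apply is_derive_scal. apply isd_id.
        apply (is_derive_inv (fun u => 1 + Q u)).
        replace (dQ x) with (0 + dQ x) by ring. apply isd_plus. apply isd_const. auto. lra.
      - apply abs_split in Hb.
        assert (0 < (1 + Q x)^2) by (apply pow_lt; lra).
        assert (- dQ x / (1 + Q x)^2 <= A).
        { apply (Rmult_le_reg_r ((1 + Q x)^2)); auto. unfold Rdiv. rewrite Rmult_assoc, Rinv_l by lra. nra. }
        lra. }
    fold Q1 in M. lra. }
  assert (Sb : forall t, t1 - d <= t <= t1 -> Q t <= 2 * (Q1 + 2 * A * (t1 - t))).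
  { intros t Ht. specialize (Sa t Ht). destruct (H t ltac:(lra)) as [HQt _].
    set (e := A * (t1 - t)) in *. assert (He : 0 <= e <= 1/8).
    { unfold e. split. nra. apply Rle_trans with (A * d); [|lra]. apply Rmult_le_compat_l; lra. }
    set (y := / (1 + Q t)) in *. assert (Ey : y * (1 + Q t) = 1) by (unfold y; field; lra).
    set (m := / (1 + Q1)) in *. assert (Em : m * (1 + Q1) = 1) by (unfold m; field; lra).
    assert (m > 1/2).
    { unfold m. apply Rlt_gt. apply (Rmult_lt_reg_r (1 + Q1)); [lra|]. rewrite Rinv_l by lra. lra. }
    assert (Hy : y >= m - e) by lra.
    assert (Hqt : (1 + Q t) * (m - e) <= 1).
    { apply Rle_trans with ((1 + Q t) * y). apply Rmult_le_compat_l; lra. lra. }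
    replace (2 * A * (t1 - t)) with (2 * e) by (unfold e; ring).
    set (u := 1 + Q1) in *. set (q := Q t) in *.
    assert (H1 : (1 + q) * (1 - e * u) <= u).
    { replace ((1 + q) * (1 - e * u)) with ((1 + q) * (m - e) * u) by (rewrite <- Em; ring).
      apply Rle_trans with (1 * u). apply Rmult_le_compat_r; unfold u; lra. lra. }
    assert (H2 : u <= (2 * u - 1 + 4 * e) * (1 - e * u)).
    { unfold u in *. assert (0 <= e * Q1) by nra. assert (e * (Q1 * Q1) <= e * Q1) by nra.
      assert (e * e * Q1 <= e * Q1 / 8) by nra. assert (e * e <= e / 8) by nra. nra. }
    assert (H3 : 0 < 1 - e * u) by (unfold u in *; nra).
    assert (1 + q <= 2 * u - 1 + 4 * e).
    { apply (Rmult_le_reg_r (1 - e * u)); auto. lra. }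
    unfold u in *. lra. }
  assert (Sc : V (t1 - d) + / (4 * A) * ln (Q1 + 2 * A * (t1 - (t1 - d))) <=
               V t1 + / (4 * A) * ln (Q1 + 2 * A * (t1 - t1))).
  { apply (mono_deriv (fun u => V u + / (4 * A) * ln (Q1 + 2 * A * (t1 - u)))
      (fun u => / Q u + / (4 * A) * (- (2 * A) / (Q1 + 2 * A * (t1 - u))))); [lra|].
    intros x Hx. destruct (H x ltac:(lra)) as [Hp [_ [_ [HV _]]]]. split.
    - apply isd_plus; auto. apply is_derive_scal. auto_derive. nra. field. nra.
    - specialize (Sb x Hx).
      assert (0 < Q1 + 2 * A * (t1 - x)) by nra.
      replace (/ Q x + / (4 * A) * (- (2 * A) / (Q1 + 2 * A * (t1 - x)))) with
        (/ Q x - / (2 * (Q1 + 2 * A * (t1 - x)))) by (field; lra).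
      assert (/ (2 * (Q1 + 2 * A * (t1 - x))) <= / Q x).
      { apply Rinv_le_contravar; lra. }
      lra. }
  replace (t1 - (t1 - d)) with d in Sc by ring. replace (t1 - t1) with 0 in Sc by ring.
  rewrite Rmult_0_r, Rplus_0_r in Sc.
  destruct (H (t1 - d) ltac:(lra)) as [_ [_ [_ [_ HV1]]]].
  destruct (H t1 ltac:(lra)) as [_ [_ [_ [_ HV2]]]].
  apply abs_split in HV1. apply abs_split in HV2.
  assert (Hln : ln (2 * A * d) <= ln (Q1 + 2 * A * d)) by (apply ln_le; nra).
  assert (Hl : ln (2 * A * d) - 8 * A * K0 <= ln Q1).
  { assert (/ (4 * A) * (ln (Q1 + 2 * A * d) - ln Q1) <= 2 * K0) by lra.
    apply (Rmult_le_compat_l (4 * A)) in H0; [|lra].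
    rewrite <- Rmult_assoc, Rinv_r, Rmult_1_l in H0 by lra. nra. }
  apply exp_le_mono in Hl. rewrite exp_ln in Hl by lra.
  unfold Rminus in Hl. rewrite exp_plus, exp_ln in Hl by nra.
  replace (-(8 * A * K0)) with (- (8 * A * K0)) by ring. lra.
Qed.

Lemma ival_ex al be : Rbar_lt al be -> exists s, in_ival al be s.
Proof.
  unfold in_ival. destruct al as [a| |], be as [b| |]; simpl; intros H; try tauto.
  - exists ((a+b)/2). lra.
  - exists (a+1). lra.
  - exists (b-1). lra.
  - exists 0. auto.
Qed.

Lemma ival_conv al be s s' u : in_ival al be s -> in_ival al be s' -> s <= u <= s' -> in_ival al be u.
Proof.
  unfold in_ival. destruct al as [a| |], be as [b| |]; simpl; intros; lra.
Qed.

Lemma ival_loc al be s : in_ival al be s -> locally s (in_ival al be).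
Proof.
  intros [H1 H2]. apply (locally_interval _ s al be); auto. intros. split; auto.
Qed.

Lemma ivt_seg f x y : x <= y -> (forall a, x <= a <= y -> continuity_pt f a) -> f x <= 0 <= f y ->
  exists z, x <= z <= y /\ f z = 0.
Proof.
  intros Hxy Hc Hf.
  destruct (Req_dec (f x) 0). exists x; split; auto; lra.
  destruct (Req_dec (f y) 0). exists y; split; auto; lra.
  set (cl := fun t => Rmax x (Rmin y t)).
  assert (Hcl : forall t, x <= cl t <= y) by (intros; unfold cl, Rmax, Rmin; repeat destruct Rle_dec; lra).
  assert (Hcl2 : forall t, x <= t <= y -> cl t = t) by (intros; unfold cl, Rmax, Rmin; repeat destruct Rle_dec; lra).
  assert (Hg : continuity (fun t => f (cl t))).
  { intros t. apply (continuity_pt_comp cl f). apply continuity_pt_filterlim. apply (lip_cont _ 1).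
    intros u v. unfold cl, Rmax, Rmin. apply Rabs_le.
    pose proof (Rle_abs (u - v)). pose proof (Rle_abs (-(u - v))). rewrite Rabs_Ropp in H2.
    repeat destruct Rle_dec; lra.
    apply Hc; auto. }
  destruct (Req_dec x y) as [Exy|Nxy]. { subst. lra. }
  destruct (IVT (fun t => f (cl t)) x y Hg) as [z [Hz1 Hz2]].
  lra. cbv beta. rewrite Hcl2; lra. cbv beta. rewrite Hcl2; lra.
  exists z. split; auto. rewrite <- (Hcl2 z); auto.
Qed.

Lemma inv_der (Fn G : R -> R) t d : continuous G t ->
  locally t (fun u => Fn (G u) = u) -> is_derive Fn (G t) d -> d <> 0 -> is_derive G t (/ d).
Proof.
  intros Hc Hl Hd Hd0. apply is_derive_Reals. apply is_derive_Reals in Hd.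
  intros eps Heps.
  set (e1 := Rmin (Rabs d / 2) (eps * (d * d) / 2)).
  assert (Hdd : 0 < Rabs d) by (apply Rabs_pos_lt; auto).
  assert (He1 : 0 < e1).
  { unfold e1, Rmin. destruct Rle_dec. lra. assert (0 < d * d) by nra. nra. }
  destruct (Hd e1 He1) as [d1 Hd1].
  apply continuity_pt_filterlim in Hc. destruct (proj1 (continuity_pt_locally _ _) Hc (mkposreal _ (cond_pos d1))) as [d2 Hd2].
  destruct Hl as [d3 Hd3].
  exists (mkposreal _ (Rmin_pos _ _ (cond_pos d2) (cond_pos d3))). simpl.
  intros hh Hh0 Hh.
  assert (Hhh : Rabs hh < d2 /\ Rabs hh < d3).
  { split; eapply Rlt_le_trans; eauto. apply Rmin_l. apply Rmin_r. }
  assert (Ht : Fn (G t) = t) by (apply Hd3; apply ball_center).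
  assert (Hth : Fn (G (t + hh)) = t + hh).
  { apply Hd3. unfold ball; simpl; unfold AbsRing_ball, minus, plus, opp; simpl. 
    replace (t + hh + - t) with hh by ring. apply Hhh. }
  set (eta := G (t + hh) - G t).
  assert (Heta : eta <> 0).
  { intros E. unfold eta in E. assert (G (t + hh) = G t) by lra. rewrite H in Hth. lra. }
  assert (Heta2 : Rabs eta < d1).
  { specialize (Hd2 (t + hh)). unfold eta. apply Hd2.
    unfold ball; simpl; unfold AbsRing_ball, minus, plus, opp; simpl.
    replace (t + hh + - t) with hh by ring. apply Hhh. }
  specialize (Hd1 eta Heta Heta2).
  replace (G t + eta) with (G (t + hh)) in Hd1 by (unfold eta; ring).
  rewrite Hth, Ht in Hd1. replace (t + hh - t) with hh in Hd1 by ring.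
  replace ((G (t + hh) - G t) / hh) with (eta / hh) by reflexivity.
  set (q := hh / eta) in *.
  assert (Hq1 : Rabs (q - d) < Rabs d / 2) by (eapply Rlt_le_trans; [exact Hd1| apply Rmin_l]).
  assert (Hq2 : Rabs (q - d) < eps * (d * d) / 2) by (eapply Rlt_le_trans; [exact Hd1| apply Rmin_r]).
  assert (Hq0 : Rabs q >= Rabs d / 2).
  { pose proof (Rabs_triang_inv d (d - q)). replace (d - (d - q)) with q in H by ring.
    rewrite Rabs_minus_sym in Hq1. lra. }
  assert (q <> 0) by (intro E; rewrite E, Rabs_R0 in Hq0; lra).
  replace (eta / hh) with (/ q) by (unfold q; field; auto).
  replace (/ q - / d) with ((d - q) / (q * d)) by (field; auto).
  unfold Rdiv. rewrite Rabs_mult, Rabs_inv, Rabs_mult. rewrite Rabs_minus_sym.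
  assert (0 < Rabs q * Rabs d) by nra.
  apply (Rmult_lt_reg_r (Rabs q * Rabs d)); auto.
  rewrite Rmult_assoc, Rinv_l by lra. rewrite Rmult_1_r.
  assert (Rabs d * Rabs d = d * d) by (rewrite <- Rabs_mult; apply Rabs_pos_eq; nra).
  assert (Rabs q * Rabs d >= Rabs d / 2 * Rabs d) by nra.
  assert (eps * (Rabs q * Rabs d) >= eps * (Rabs d / 2 * Rabs d)) by nra.
  nra.
Qed.

Section Sol.
Variables (a b : R) (C : R * R) (al be : Rbar) (X T : R -> R * R) (k : R -> R).
Hypothesis Hsol : sol_curve a b C al be X T k.

Lemma s_alb : Rbar_lt al be.
Proof. apply Hsol. Qed.

Lemma s_dX1 s : in_ival al be s -> is_derive (fun t => fst (X t)) s (fst (T s)).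
Proof. intros H. apply (proj2 Hsol s H). Qed.
Lemma s_dX2 s : in_ival al be s -> is_derive (fun t => snd (X t)) s (snd (T s)).
Proof. intros H. apply (proj2 Hsol s H). Qed.
Lemma s_dT1 s : in_ival al be s -> is_derive (fun t => fst (T t)) s (k s * snd (T s)).
Proof. intros H. apply (proj2 Hsol s H). Qed.
Lemma s_dT2 s : in_ival al be s -> is_derive (fun t => snd (T t)) s (k s * fst (T s)).
Proof. intros H. apply (proj2 Hsol s H). Qed.
Lemma s_lor s : in_ival al be s -> fst (T s) * fst (T s) - snd (T s) * snd (T s) = 1.
Proof. intros H. apply (proj2 Hsol s H). Qed.
Lemma s_k s : in_ival al be s ->
  k s = a * (fst (X s) * fst (T s) - snd (X s) * snd (T s)) - b * (fst (X s) * snd (T s) - snd (X s) * fst (T s))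
        - (fst C * snd (T s) - snd C * fst (T s)).
Proof. intros H. destruct (proj2 Hsol s H) as [_ [_ [_ [_ [_ E]]]]]. rewrite <- E. unfold lor, hmul. simpl. ring. Qed.

Lemma cont_of_der f s d : is_derive f s d -> continuity_pt f s.
Proof. intros H. apply continuity_pt_filterlim. apply (ex_derive_continuous f). exists d; auto. Qed.

Lemma s_sign : exists sg, (sg = 1 \/ sg = -1) /\ forall s, in_ival al be s -> 0 < sg * fst (T s).
Proof.
  destruct (ival_ex _ _ s_alb) as [s0 Hs0].
  assert (Hnz : forall s, in_ival al be s -> fst (T s) <> 0).
  { intros s Hs E. pose proof (s_lor s Hs). rewrite E in H. nra. }
  set (sg := if Rlt_dec 0 (fst (T s0)) then 1 else -1).
  assert (Hsg : sg = 1 \/ sg = -1) by (unfold sg; destruct Rlt_dec; auto).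
  assert (Hs0p : 0 < sg * fst (T s0)).
  { unfold sg; destruct Rlt_dec. lra. specialize (Hnz s0 Hs0).
    destruct (Rtotal_order 0 (fst (T s0))) as [|[|]]; lra. }
  exists sg. split; auto. intros s Hs.
  destruct (Rlt_or_le 0 (sg * fst (T s))) as [|Hle]; auto. exfalso.
  assert (Hc : forall u, Rmin s0 s <= u <= Rmax s0 s -> continuity_pt (fun t => sg * fst (T t)) u).
  { intros u Hu. assert (in_ival al be u).
    { unfold Rmin, Rmax in Hu. destruct Rle_dec; [apply (ival_conv _ _ s0 s)|apply (ival_conv _ _ s s0)]; auto; lra. }
    apply cont_of_der with (sg * (k u * snd (T u))). apply is_derive_scal. apply s_dT1; auto. }
  destruct (Rle_or_lt s0 s) as [Hss|Hss].
  - destruct (ivt_seg (fun t => - (sg * fst (T t))) s0 s Hss) as [z [Hz1 Hz2]].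
    + intros u Hu. apply continuity_pt_opp. apply Hc. rewrite Rmin_left, Rmax_right; lra.
    + lra.
    + apply (Hnz z). apply (ival_conv _ _ s0 s); auto. destruct Hsg as [E|E]; rewrite E in Hz2; lra.
  - destruct (ivt_seg (fun t => sg * fst (T t)) s s0 ltac:(lra)) as [z [Hz1 Hz2]].
    + intros u Hu. apply Hc. rewrite Rmin_right, Rmax_left; lra.
    + lra.
    + apply (Hnz z). apply (ival_conv _ _ s s0); auto. destruct Hsg as [E|E]; rewrite E in Hz2; lra.
Qed.

Lemma s_T2_lt sg s : (sg = 1 \/ sg = -1) -> in_ival al be s -> 0 < sg * fst (T s) ->
  Rabs (snd (T s)) < sg * fst (T s) /\ 1 <= sg * fst (T s).
Proof.
  intros Hsg Hs Hp. pose proof (s_lor s Hs).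
  assert (E : (sg * fst (T s)) * (sg * fst (T s)) = fst (T s) * fst (T s)) by (destruct Hsg; subst; ring).
  split.
  - apply Rsqr_incrst_0; try lra. 2: apply Rabs_pos. unfold Rsqr. rewrite <- Rabs_mult, Rabs_pos_eq by nra. nra.
  - nra.
Qed.

Lemma s_mono sg s s' : (sg = 1 \/ sg = -1) -> (forall u, in_ival al be u -> 0 < sg * fst (T u)) ->
  in_ival al be s -> in_ival al be s' -> s <= s' ->
  s' - s <= sg * fst (X s') - sg * fst (X s) /\
  Rabs (snd (X s') - snd (X s)) <= sg * fst (X s') - sg * fst (X s).
Proof.
  intros Hsg Hp Hs Hs' Hss.
  assert (Hin : forall u, s <= u <= s' -> in_ival al be u) by (intros; apply (ival_conv _ _ s s'); auto).
  split.
  - pose proof (mono_deriv (fun t => sg * fst (X t) - t) (fun t => sg * fst (T t) - 1) s s' Hss).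
    cbv beta in H. enough (sg * fst (X s) - s <= sg * fst (X s') - s') by lra. apply H.
    intros x Hx. split. apply isd_minus. apply is_derive_scal. apply s_dX1; auto. apply isd_id.
    destruct (s_T2_lt sg x Hsg (Hin x Hx) (Hp x (Hin x Hx))). lra.
  - pose proof (mono_deriv (fun t => sg * fst (X t) - snd (X t)) (fun t => sg * fst (T t) - snd (T t)) s s' Hss) as H1.
    pose proof (mono_deriv (fun t => sg * fst (X t) + snd (X t)) (fun t => sg * fst (T t) + snd (T t)) s s' Hss) as H2.
    cbv beta in H1, H2.
    assert (sg * fst (X s) - snd (X s) <= sg * fst (X s') - snd (X s')).
    { apply H1. intros x Hx. split. apply isd_minus. apply is_derive_scal. apply s_dX1; auto. apply s_dX2; auto.
      destruct (s_T2_lt sg x Hsg (Hin x Hx) (Hp x (Hin x Hx))). pose proof (Rle_abs (snd (T x))). lra. }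
    assert (sg * fst (X s) + snd (X s) <= sg * fst (X s') + snd (X s')).
    { apply H2. intros x Hx. split. apply isd_plus. apply is_derive_scal. apply s_dX1; auto. apply s_dX2; auto.
      destruct (s_T2_lt sg x Hsg (Hin x Hx) (Hp x (Hin x Hx))). pose proof (Rle_abs (- snd (T x))).
      rewrite Rabs_Ropp in H4. lra. }
    apply Rabs_le. lra.
Qed.
End Sol.

Definition st (X T : R -> R * R) (t : R) : nat -> R :=
  fun i => match i with 0%nat => fst (X t) | 1%nat => snd (X t) | 2%nat => fst (T t) | _ => snd (T t) end.

Lemma is_derive_eq (f : R -> R) (x l l' : R) : is_derive f x l -> l = l' -> is_derive f x l'.
Proof. intros H E; subst; auto. Qed.

Lemma k_bound_gen a b c1 c2 x y t1 t2 RX : Rabs x <= RX -> Rabs y <= RX ->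
  Rabs (a * (x * t1 - y * t2) - b * (x * t2 - y * t1) - (c1 * t2 - c2 * t1)) <=
  ((Rabs a + Rabs b) * RX + Rabs c1 + Rabs c2) * (Rabs t1 + Rabs t2).
Proof.
  intros Hx Hy.
  assert (E1 : Rabs (x * t1 - y * t2) <= RX * (Rabs t1 + Rabs t2)).
  { unfold Rminus. eapply Rle_trans. apply Rabs_triang. rewrite Rabs_Ropp, !Rabs_mult.
    pose proof (Rabs_pos t1). pose proof (Rabs_pos t2). nra. }
  assert (E2 : Rabs (x * t2 - y * t1) <= RX * (Rabs t1 + Rabs t2)).
  { unfold Rminus. eapply Rle_trans. apply Rabs_triang. rewrite Rabs_Ropp, !Rabs_mult.
    pose proof (Rabs_pos t1). pose proof (Rabs_pos t2). nra. }
  assert (E3 : Rabs (c1 * t2 - c2 * t1) <= (Rabs c1 + Rabs c2) * (Rabs t1 + Rabs t2)).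
  { unfold Rminus. eapply Rle_trans. apply Rabs_triang. rewrite Rabs_Ropp, !Rabs_mult.
    pose proof (Rabs_pos t1). pose proof (Rabs_pos t2). pose proof (Rabs_pos c1). pose proof (Rabs_pos c2). nra. }
  unfold Rminus at 1. eapply Rle_trans. apply Rabs_triang. rewrite Rabs_Ropp.
  unfold Rminus at 1. eapply Rle_trans. apply Rplus_le_compat_r. apply Rabs_triang. rewrite Rabs_Ropp, !Rabs_mult.
  pose proof (Rabs_pos a). pose proof (Rabs_pos b).
  pose proof (Rmult_le_compat_l _ _ _ H E1). pose proof (Rmult_le_compat_l _ _ _ H0 E2). nra.
Qed.

Lemma inbox_refl z : inbox z z.
Proof. intros i Hi. rewrite Rminus_diag, Rabs_R0. lra. Qed.

Section Ext.
Variables (a b : R) (Cc : R * R) (al be : Rbar) (X T : R -> R * R) (k : R -> R).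
Hypothesis Hsol : sol_curve a b Cc al be X T k.

Lemma st_der u i : in_ival al be u -> (i < 4)%nat ->
  is_derive (fun t => st X T t i) u (Fs a b (fst Cc) (snd Cc) (st X T u) i).
Proof.
  intros Hu Hi. destruct i as [|[|[|[|]]]]; try lia; unfold st, Fs, kf; simpl.
  - apply (s_dX1 _ _ _ _ _ _ _ _ Hsol u Hu).
  - apply (s_dX2 _ _ _ _ _ _ _ _ Hsol u Hu).
  - eapply is_derive_eq. apply (s_dT1 _ _ _ _ _ _ _ _ Hsol u Hu). rewrite (s_k _ _ _ _ _ _ _ _ Hsol u Hu). ring.
  - eapply is_derive_eq. apply (s_dT2 _ _ _ _ _ _ _ _ Hsol u Hu). rewrite (s_k _ _ _ _ _ _ _ _ Hsol u Hu). ring.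
Qed.

Lemma st_cont u i : in_ival al be u -> (i < 4)%nat -> continuity_pt (fun t => st X T t i) u.
Proof. intros. eapply cont_of_der. apply st_der; auto. Qed.


Hypothesis Hmax : maximal_sol a b Cc al be X.
Variable sg : R.
Hypothesis Hsg : sg = 1 \/ sg = -1.
Hypothesis Hpos : forall s, in_ival al be s -> 0 < sg * fst (T s).

Lemma sg2 : sg * sg = 1.
Proof. destruct Hsg; subst; ring. Qed.

Lemma abs_sg x : Rabs (sg * x) = Rabs x.
Proof. rewrite Rabs_mult. destruct Hsg; subst. rewrite Rabs_R1; ring. rewrite (Rabs_left (-1)) by lra; ring. Qed.

Lemma finite_end B K : be = Finite B -> (forall s, in_ival al be s -> sg * fst (X s) < K) -> False.
Proof.
  intros Hbe Hbd.
  set (c1 := fst Cc). set (c2 := snd Cc).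
  assert (HI : forall s, in_ival al be s -> s < B) by (intros s [_ H]; rewrite Hbe in H; exact H).
  destruct (ival_ex _ _ (s_alb _ _ _ _ _ _ _ _ Hsol)) as [sb Hsb].
  assert (HsbB : sb < B) by auto.
  assert (HIn : forall s, sb <= s < B -> in_ival al be s).
  { intros s Hs. destruct Hsb as [H1 H2]. split. eapply Rbar_lt_le_trans. exact H1. simpl; lra.
    rewrite Hbe; simpl; lra. }
  set (RX := Rabs (fst (X sb)) + Rabs (snd (X sb)) + Rabs K).
  assert (HX : forall s, sb <= s < B -> Rabs (fst (X s)) <= RX /\ Rabs (snd (X s)) <= RX).
  { intros s Hs. destruct (s_mono _ _ _ _ _ _ _ _ Hsol sg sb s Hsg Hpos Hsb (HIn s Hs) ltac:(lra)) as [M1 M2].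
    pose proof (Hbd s (HIn s Hs)) as B1. pose proof (Hbd sb Hsb) as B2.
    pose proof (Rle_abs (sg * fst (X sb))) as B3. pose proof (Rle_abs (- (sg * fst (X sb)))) as B4.
    rewrite Rabs_Ropp in B4. rewrite abs_sg in B3, B4.
    assert (B5 : Rabs (sg * fst (X s)) <= Rabs (fst (X sb)) + Rabs K).
    { apply Rabs_le. pose proof (Rle_abs K). pose proof (Rle_abs (-K)) as B6. rewrite Rabs_Ropp in B6. lra. }
    rewrite abs_sg in B5.
    pose proof (Rabs_pos (snd (X sb))). pose proof (Rabs_pos (fst (X sb))). pose proof (Rabs_pos K).
    split. unfold RX. lra.
    assert (Rabs (snd (X s)) <= Rabs (snd (X sb)) + Rabs (snd (X s) - snd (X sb))).
    { replace (snd (X s)) with (snd (X sb) + (snd (X s) - snd (X sb))) at 1 by ring. apply Rabs_triang. }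
    pose proof (Rle_abs K). unfold RX. lra. }
  assert (HRX : 0 <= RX) by (unfold RX; pose proof (Rabs_pos (fst (X sb))); pose proof (Rabs_pos (snd (X sb))); pose proof (Rabs_pos K); lra).
  set (A0 := (Rabs a + Rabs b) * RX + Rabs c1 + Rabs c2).
  assert (HA0 : 0 <= A0) by (unfold A0; pose proof (Rabs_pos a); pose proof (Rabs_pos b);
     pose proof (Rabs_pos c1); pose proof (Rabs_pos c2); nra).
  set (A := A0 + 1).
  assert (Hk : forall s, sb <= s < B -> Rabs (k s) <= A0 * (Rabs (fst (T s)) + Rabs (snd (T s)))).
  { intros s Hs. rewrite (s_k _ _ _ _ _ _ _ _ Hsol s (HIn s Hs)). destruct (HX s Hs). apply k_bound_gen; auto. }
  set (P := fun s => sg * (fst (T s) + snd (T s))).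
  set (Q := fun s => sg * (fst (T s) - snd (T s))).
  assert (HPQ : forall s, sb <= s < B -> 0 < P s /\ 0 < Q s /\ P s * Q s = 1 /\
     Rabs (fst (T s)) + Rabs (snd (T s)) <= P s + Q s).
  { intros s Hs. destruct (s_T2_lt _ _ _ _ _ _ _ _ Hsol sg s Hsg (HIn s Hs) (Hpos s (HIn s Hs))) as [L1 L2].
    pose proof (Rle_abs (snd (T s))). pose proof (Rle_abs (- snd (T s))). rewrite Rabs_Ropp in H0.
    pose proof (s_lor _ _ _ _ _ _ _ _ Hsol s (HIn s Hs)). pose proof sg2.
    assert (Rabs (fst (T s)) = sg * fst (T s)) by (rewrite <- abs_sg; apply Rabs_pos_eq; lra).
    unfold P, Q. repeat split; try nra. }
  assert (HQ : forall t, sb <= t < B -> 0 < Q t /\ is_derive Q t (sg * (k t * snd (T t) - k t * fst (T t)))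
     /\ Rabs (sg * (k t * snd (T t) - k t * fst (T t))) <= A * (Q t ^ 2 + 1)
     /\ is_derive (fun s => sg * (fst (X s) + snd (X s))) t (/ Q t) /\ Rabs (sg * (fst (X t) + snd (X t))) <= 2 * RX).
  { intros t Ht. destruct (HPQ t Ht) as [P1 [Q1 [PQ1 S1]]]. pose proof (HIn t Ht) as It. split; auto. split.
    { apply is_derive_scal. apply isd_minus. apply (s_dT1 _ _ _ _ _ _ _ _ Hsol t It). apply (s_dT2 _ _ _ _ _ _ _ _ Hsol t It). }
    split.
    { replace (sg * (k t * snd (T t) - k t * fst (T t))) with (- k t * Q t) by (unfold Q; ring).
      rewrite Rabs_mult, Rabs_Ropp, (Rabs_pos_eq (Q t)) by lra. specialize (Hk t Ht).
      assert (Rabs (k t) * Q t <= A0 * (P t + Q t) * Q t) by (apply Rmult_le_compat_r; nra).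
      pose proof (Rabs_pos (k t)). unfold A. nra. }
    split.
    { eapply is_derive_eq. apply is_derive_scal. apply isd_plus. apply (s_dX1 _ _ _ _ _ _ _ _ Hsol t It).
      apply (s_dX2 _ _ _ _ _ _ _ _ Hsol t It). fold (P t). apply (Rmult_eq_reg_r (Q t)); [|lra].
      rewrite Rinv_l by lra. lra. }
    rewrite abs_sg. eapply Rle_trans. apply Rabs_triang. destruct (HX t Ht). lra. }
  assert (HP : forall t, sb <= t < B -> 0 < P t /\ is_derive P t (sg * (k t * snd (T t) + k t * fst (T t)))
     /\ Rabs (sg * (k t * snd (T t) + k t * fst (T t))) <= A * (P t ^ 2 + 1)
     /\ is_derive (fun s => sg * (fst (X s) - snd (X s))) t (/ P t) /\ Rabs (sg * (fst (X t) - snd (X t))) <= 2 * RX).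
  { intros t Ht. destruct (HPQ t Ht) as [P1 [Q1 [PQ1 S1]]]. pose proof (HIn t Ht) as It. split; auto. split.
    { apply is_derive_scal. apply isd_plus. apply (s_dT1 _ _ _ _ _ _ _ _ Hsol t It). apply (s_dT2 _ _ _ _ _ _ _ _ Hsol t It). }
    split.
    { replace (sg * (k t * snd (T t) + k t * fst (T t))) with (k t * P t) by (unfold P; ring).
      rewrite Rabs_mult, (Rabs_pos_eq (P t)) by lra. specialize (Hk t Ht).
      assert (Rabs (k t) * P t <= A0 * (P t + Q t) * P t) by (apply Rmult_le_compat_r; nra).
      pose proof (Rabs_pos (k t)). unfold A. nra. }
    split.
    { eapply is_derive_eq. apply is_derive_scal. apply isd_minus. apply (s_dX1 _ _ _ _ _ _ _ _ Hsol t It).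
      apply (s_dX2 _ _ _ _ _ _ _ _ Hsol t It). fold (Q t). apply (Rmult_eq_reg_r (P t)); [|lra].
      rewrite Rinv_l by lra. lra. }
    rewrite abs_sg. unfold Rminus. eapply Rle_trans. apply Rabs_triang. rewrite Rabs_Ropp. destruct (HX t Ht). lra. }
  assert (HApos : 0 < A) by (unfold A; lra).
  pose proof (small_bound Q _ _ A (2 * RX) sb B HsbB HApos ltac:(lra) HQ) as BQ.
  pose proof (small_bound P _ _ A (2 * RX) sb B HsbB HApos ltac:(lra) HP) as BP.
  set (d := Rmin (/ (8 * A)) ((B - sb) / 2)) in *.
  set (beta := Rmin 1 (2 * A * d * exp (- (8 * A * (2 * RX))))) in *.
  assert (Hd0 : 0 < d).
  { unfold d, Rmin. destruct Rle_dec. apply Rinv_0_lt_compat; lra. lra. }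
  assert (HdB : d <= (B - sb) / 2) by apply Rmin_r.
  assert (Hbeta : 0 < beta).
  { unfold beta, Rmin. destruct Rle_dec. lra. pose proof (exp_pos (- (8 * A * (2 * RX)))).
    apply Rmult_lt_0_compat; auto. nra. }
  set (cc := sb + d).
  set (R := RX + 2 * / beta).
  assert (HR : 0 <= R) by (unfold R; pose proof (Rinv_0_lt_compat _ Hbeta); lra).
  assert (Hst : forall t, cc <= t < B -> forall i, (i < 4)%nat -> Rabs (st X T t i) <= R).
  { intros t Ht i Hi. assert (Ht' : sb <= t < B) by (unfold cc in Ht; lra).
    specialize (BQ t Ht). specialize (BP t Ht). destruct (HPQ t Ht') as [P1 [Q1 [PQ1 S1]]].
    assert (HPb : P t <= / beta).
    { replace (P t) with (/ Q t) by (field_simplify_eq; lra). apply Rinv_le_contravar; lra. }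
    assert (HQb : Q t <= / beta).
    { replace (Q t) with (/ P t) by (field_simplify_eq; lra). apply Rinv_le_contravar; lra. }
    destruct (HX t Ht').
    pose proof (Rabs_pos (fst (T t))). pose proof (Rabs_pos (snd (T t))). pose proof (Rinv_0_lt_compat _ Hbeta).
    unfold R. destruct i as [|[|[|[|]]]]; try lia; unfold st; simpl; lra. }
  set (M := Mc a b c1 c2 R). set (L := Lc a b c1 c2 R).
  assert (HM : 0 <= M).
  { unfold M, Mc. pose proof (Kb_nonneg a b c1 c2 (R + 1) ltac:(lra)). nra. }
  assert (HL : 0 <= L).
  { unfold L, Lc. pose proof (Kb_nonneg a b c1 c2 (R + 1) ltac:(lra)).
    pose proof (Lk_nonneg a b c1 c2 (R + 1) ltac:(lra)). nra. }
  set (h := / (M + 2 * L + 1)).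
  assert (Hh : 0 < h) by (unfold h; apply Rinv_0_lt_compat; lra).
  assert (Hh1 : h * (M + 2 * L + 1) = 1) by (unfold h; field; lra).
  assert (HMh : M * h <= 1) by nra.
  assert (HLh : L * h <= 1/2) by nra.
  assert (HccB : cc < B) by (unfold cc; lra).
  set (s1 := Rmax cc (B - h / 4)).
  assert (Hs1 : cc <= s1 < B /\ B - s1 <= h / 4).
  { unfold s1, Rmax. destruct Rle_dec; lra. }
  assert (Hst1 : forall j, (j < 4)%nat -> Rabs (st X T s1 j) <= R) by (intros; apply Hst; auto; lra).
  destruct (picard (Fs a b c1 c2) (st X T s1) s1 h M L Hh HM HL HLh HMh
    (fun z Hz i Hi => Fs_bound a b c1 c2 R (st X T s1) z HR Hst1 Hz i Hi)
    (fun z w dd Hz Hw Hd i Hi => Fs_lip a b c1 c2 R _ z w dd HR Hst1 Hz Hw Hd i Hi))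
    as [ph [Pbox [Plip [P0 Pder]]]].
  assert (Pcont : forall t i, (i < 4)%nat -> continuity_pt (fun u => ph u i) t).
  { intros t i Hi. apply continuity_pt_filterlim. apply (lip_cont (fun u => ph u i) M). intros x y. apply Plip; auto. }
  assert (HInc : forall t, cc <= t < B -> in_ival al be t) by (intros; apply HIn; unfold cc in *; lra).
  assert (Stbox : forall t, s1 <= t < B -> inbox (st X T s1) (st X T t)).
  { intros t Ht i Hi.
    destruct (MVT_gen (fun u => st X T u i) s1 t (fun u => Fs a b c1 c2 (st X T u) i)) as [c [Hc Hm]].
    + intros x Hx. rewrite Rmin_left, Rmax_right in Hx by lra. apply st_der; auto. apply HInc; lra.
    + intros x Hx. rewrite Rmin_left, Rmax_right in Hx by lra. apply st_cont; auto. apply HInc; lra.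
    + rewrite Rmin_left, Rmax_right in Hc by lra. cbv beta in Hm. rewrite Hm.
      assert (Rabs (Fs a b c1 c2 (st X T c) i) <= M).
      { apply (Fs_bound a b c1 c2 R (st X T c)); auto. intros; apply Hst; auto; lra. apply inbox_refl. }
      rewrite Rabs_mult, (Rabs_pos_eq (t - s1)) by lra.
      pose proof (Rabs_pos (Fs a b c1 c2 (st X T c) i)). nra. }
  assert (Agr : forall t, s1 <= t < B -> forall i, (i < 4)%nat -> st X T t i = ph t i).
  { intros t Ht i Hi.
    apply (uniq (Fs a b c1 c2) (st X T s1) L (st X T) ph s1 t); auto; try lra.
    - nra.
    - intros z w dd Hz Hw Hd j Hj. apply (Fs_lip a b c1 c2 R (st X T s1)); auto.
    - intros u Hu. split. apply Stbox; lra. apply Pbox.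
    - intros j Hj. symmetry. apply P0; auto.
    - intros u j Hj Hu. split. apply st_der; auto. apply HInc; lra. apply Pder; auto. lra.
    - intros u j Hj Hu. apply continuity_pt_minus. apply st_cont; auto. apply HInc; lra. apply Pcont; auto. }
  assert (Inv1 : forall s, s1 < s < s1 + h -> ph s 2%nat * ph s 2%nat - ph s 3%nat * ph s 3%nat = 1).
  { intros s Hs. set (ts := (s1 + B) / 2).
    assert (Hts : s1 < ts < B) by (unfold ts; lra).
    assert (W1 : ph ts 2%nat * ph ts 2%nat - ph ts 3%nat * ph ts 3%nat = 1).
    { rewrite <- !Agr by (auto; lra). unfold st. simpl. apply (s_lor _ _ _ _ _ _ _ _ Hsol). apply HInc; lra. }
    set (w := fun u => ph u 2%nat * ph u 2%nat - ph u 3%nat * ph u 3%nat).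
    assert (Dw : forall u, s1 < u < s1 + h -> is_derive w u 0).
    { intros u Hu. unfold w. eapply is_derive_eq.
      apply isd_minus; apply isd_mult; apply Pder; auto.
      simpl. ring. }
    destruct (MVT_gen w ts s (fun _ => 0)) as [c [_ Hm]].
    - intros x Hx. apply Dw. unfold Rmin, Rmax in Hx. destruct Rle_dec; lra.
    - intros x Hx. apply (cont_of_der w x 0). apply Dw. unfold Rmin, Rmax in Hx. destruct Rle_dec; lra.
    - unfold w in Hm. lra. }
  set (X' := fun t => if Rlt_dec t B then X t else (ph t 0%nat, ph t 1%nat)).
  set (T' := fun t => if Rlt_dec t B then T t else (ph t 2%nat, ph t 3%nat)).
  set (k' := fun t => a * lor (X' t) (T' t) - b * lor (X' t) (hmul (T' t)) - lor Cc (hmul (T' t))).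
  apply Hmax. exists al, (Finite (s1 + h)), X', T', k'.
  assert (Is1 : in_ival al be s1) by (apply HInc; lra).
  split; [| split; [apply Rbar_le_refl | split; [rewrite Hbe; simpl; lra | split]]].
  - split.
    { eapply Rbar_lt_le_trans. apply (proj1 Is1). simpl; lra. }
    intros s [Hs1' Hs2']. simpl in Hs2'.
    destruct (Rlt_dec s B) as [HsB|HsB].
    + assert (Is : in_ival al be s) by (split; auto; rewrite Hbe; simpl; exact HsB).
      assert (Loc : locally s (fun u => X' u = X u /\ T' u = T u)).
      { apply (locally_interval _ s m_infty B); simpl; auto. intros y _ Hy.
        unfold X', T'. destruct Rlt_dec; [auto|contradiction]. }
      assert (EX : X' s = X s) by (unfold X'; destruct Rlt_dec; [auto|contradiction]).
      assert (ET : T' s = T s) by (unfold T'; destruct Rlt_dec; [auto|contradiction]).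
      assert (Ek : k' s = k s).
      { unfold k'. rewrite EX, ET. apply (proj2 Hsol s Is). }
      destruct (proj2 Hsol s Is) as [D1 [D2 [D3 [D4 [D5 D6]]]]].
      rewrite ET, Ek. split; [|split; [|split; [|split; [|split]]]].
      * apply (is_derive_ext_loc (fun t => fst (X t))); auto. eapply filter_imp; [|exact Loc]. intros u [E _]. rewrite E; auto.
      * apply (is_derive_ext_loc (fun t => snd (X t))); auto. eapply filter_imp; [|exact Loc]. intros u [E _]. rewrite E; auto.
      * exact D3.
      * apply (is_derive_ext_loc (fun t => fst (T t))); auto. eapply filter_imp; [|exact Loc]. intros u [_ E]. rewrite E; auto.
      * apply (is_derive_ext_loc (fun t => snd (T t))); auto. eapply filter_imp; [|exact Loc]. intros u [_ E]. rewrite E; auto.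
      * rewrite <- Ek. unfold k'. rewrite ET. reflexivity.
    + assert (Hs : s1 < s < s1 + h) by lra.
      assert (Loc : locally s (fun u => X' u = (ph u 0%nat, ph u 1%nat) /\ T' u = (ph u 2%nat, ph u 3%nat))).
      { apply (locally_interval _ s s1 (s1 + h)); simpl; try lra. intros y Hy1 Hy2.
        unfold X', T'. destruct Rlt_dec as [HyB|HyB]; [|auto].
        rewrite <- !Agr by (auto; lra). unfold st. simpl. rewrite <- !surjective_pairing. auto. }
      assert (EX : X' s = (ph s 0%nat, ph s 1%nat)) by (unfold X'; destruct Rlt_dec; [contradiction|auto]).
      assert (ET : T' s = (ph s 2%nat, ph s 3%nat)) by (unfold T'; destruct Rlt_dec; [contradiction|auto]).
      assert (Ek : k' s = kf a b c1 c2 (ph s)).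
      { unfold k', kf, lor, hmul. rewrite EX, ET. unfold c1, c2. simpl. ring. }
      rewrite ET. simpl fst. simpl snd. rewrite Ek. split; [|split; [|split; [|split; [|split]]]].
      * apply (is_derive_ext_loc (fun u => ph u 0%nat)). eapply filter_imp; [|exact Loc]. intros u [E _]. rewrite E; auto.
        apply (Pder s 0%nat); auto.
      * apply (is_derive_ext_loc (fun u => ph u 1%nat)). eapply filter_imp; [|exact Loc]. intros u [E _]. rewrite E; auto.
        apply (Pder s 1%nat); auto.
      * unfold lor. simpl. apply Inv1; auto.
      * apply (is_derive_ext_loc (fun u => ph u 2%nat)). eapply filter_imp; [|exact Loc]. intros u [_ E]. rewrite E; auto.
        apply (Pder s 2%nat); auto.
      * apply (is_derive_ext_loc (fun u => ph u 3%nat)). eapply filter_imp; [|exact Loc]. intros u [_ E]. rewrite E; auto.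
        apply (Pder s 3%nat); auto.
      * rewrite <- Ek. unfold k'. rewrite ET. reflexivity.
  - right. rewrite Hbe. intro E. injection E. lra.
  - intros s Is. unfold X'. destruct Rlt_dec; auto. exfalso. apply n. apply HI; auto.
Qed.

Lemma right_unb K : exists s, in_ival al be s /\ K <= sg * fst (X s).
Proof.
  destruct (classic (exists s, in_ival al be s /\ K <= sg * fst (X s))) as [H|H]; auto. exfalso.
  assert (Hbd : forall s, in_ival al be s -> sg * fst (X s) < K).
  { intros s Hs. destruct (Rlt_or_le (sg * fst (X s)) K); auto. exfalso. apply H. exists s; auto. }
  pose proof (s_alb _ _ _ _ _ _ _ _ Hsol) as Hab.
  destruct (ival_ex _ _ Hab) as [s0 Hs0].
  case_eq be.
  - intros B HB. apply (finite_end B K HB Hbd).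
  - intros HB. set (s := s0 + Rabs (K - sg * fst (X s0)) + 1).
    assert (Hs : in_ival al be s).
    { split. eapply Rbar_lt_le_trans. apply (proj1 Hs0). simpl. unfold s. pose proof (Rabs_pos (K - sg * fst (X s0))). lra.
      rewrite HB. simpl. auto. }
    destruct (s_mono _ _ _ _ _ _ _ _ Hsol sg s0 s Hsg Hpos Hs0 Hs) as [M1 _].
    { unfold s. pose proof (Rabs_pos (K - sg * fst (X s0))). lra. }
    specialize (Hbd s Hs). pose proof (Rle_abs (K - sg * fst (X s0))).
    assert (Es : s = s0 + Rabs (K - sg * fst (X s0)) + 1) by reflexivity. lra.
  - intros HB. rewrite HB in Hab. destruct al; simpl in Hab; auto.
Qed.

End Ext.

Lemma isd_rev (f : R -> R) s d : is_derive f (-s) d -> is_derive (fun t => f (-t)) s (-d).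
Proof.
  intros H. apply is_derive_Reals. apply is_derive_Reals in H.
  replace (-d) with (d * (-1)) by ring.
  apply (derivable_pt_lim_comp Ropp f s (-1) d).
  - replace (-1) with (- (1)) by ring. apply derivable_pt_lim_opp. apply derivable_pt_lim_id.
  - exact H.
Qed.

Lemma ival_rev al be s : in_ival (Rbar_opp be) (Rbar_opp al) s <-> in_ival al be (-s).
Proof. unfold in_ival. destruct al, be; simpl; split; intros; lra. Qed.

Definition revT (T : R -> R * R) := fun s => (- fst (T (-s)), - snd (T (-s))).

Lemma rev_sol a b C al be X T k : sol_curve a b C al be X T k ->
  sol_curve a b C (Rbar_opp be) (Rbar_opp al) (fun s => X (-s)) (revT T) (fun s => - k (-s)).
Proof.
  intros [Hab Hs]. split.
  { destruct al, be; simpl in *; auto; lra. }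
  intros s Hi. apply ival_rev in Hi. destruct (Hs (-s) Hi) as [D1 [D2 [D3 [D4 [D5 D6]]]]].
  unfold revT, lor, hmul in *; simpl in *.
  split; [|split; [|split; [|split; [|split]]]].
  - apply (isd_rev (fun t => fst (X t))); auto.
  - apply (isd_rev (fun t => snd (X t))); auto.
  - lra.
  - eapply is_derive_eq. apply (isd_rev (fun t => - fst (T t))).
    eapply is_derive_eq. apply (is_derive_opp (fun t => fst (T t))). exact D4. reflexivity. unfold opp; simpl. ring.
  - eapply is_derive_eq. apply (isd_rev (fun t => - snd (T t))).
    eapply is_derive_eq. apply (is_derive_opp (fun t => snd (T t))). exact D5. reflexivity. unfold opp; simpl; ring.
  - rewrite <- D6. ring.
Qed.

Lemma Rbar_opp_lt x y : Rbar_lt x y -> Rbar_lt (Rbar_opp y) (Rbar_opp x).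
Proof. destruct x, y; simpl; auto; lra. Qed.
Lemma Rbar_opp_le' x y : Rbar_le x y -> Rbar_le (Rbar_opp y) (Rbar_opp x).
Proof. destruct x, y; simpl; auto; lra. Qed.
Lemma Rbar_opp_inj x y : Rbar_opp x = Rbar_opp y -> x = y.
Proof. intros H. rewrite <- (Rbar_opp_involutive x), <- (Rbar_opp_involutive y), H. auto. Qed.

Lemma rev_max a b C al be X : maximal_sol a b C al be X ->
  maximal_sol a b C (Rbar_opp be) (Rbar_opp al) (fun s => X (-s)).
Proof.
  intros Hm [al2 [be2 [X2 [T2 [k2 [Hs [Hl1 [Hl2 [Hn Ha]]]]]]]]].
  apply Hm. exists (Rbar_opp be2), (Rbar_opp al2), (fun s => X2 (-s)), (revT T2), (fun s => - k2 (-s)).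
  split; [apply rev_sol; auto|].
  split. { rewrite <- (Rbar_opp_involutive al). apply Rbar_opp_le'. auto. }
  split. { rewrite <- (Rbar_opp_involutive be). apply Rbar_opp_le'. auto. }
  split. { destruct Hn as [Hn|Hn]; [right|left]; intro E; apply Hn; rewrite <- E;
           rewrite Rbar_opp_involutive; auto. }
  intros s Hi. rewrite Ha. rewrite Ropp_involutive; auto.
  apply ival_rev. rewrite Ropp_involutive. auto.
Qed.

Theorem lemma4p1 (a b : R) (C : R * R) (al be : Rbar)
  (X T : R -> R * R) (k : R -> R) :
  sol_curve a b C al be X T k ->
  maximal_sol a b C al be X ->
  exists f : R -> R,
    (forall t : R, ex_derive f t /\ Rabs (Derive f t) < 1) /\
    (forall s, in_ival al be s -> snd (X s) = f (fst (X s))) /\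
    (forall t : R, exists s, in_ival al be s /\ fst (X s) = t).
Proof.
  intros Hsol Hmax.
  destruct (s_sign _ _ _ _ _ _ _ _ Hsol) as [sg [Hsg Hpos]].
  assert (Hsg2 : sg * sg = 1) by (destruct Hsg; subst; ring).
  pose proof (right_unb _ _ _ _ _ _ _ _ Hsol Hmax sg Hsg Hpos) as Rt.
  assert (Lt : forall K, exists s, in_ival al be s /\ sg * fst (X s) <= K).
  { intros K.
    assert (Hpos' : forall s, in_ival (Rbar_opp be) (Rbar_opp al) s -> 0 < (- sg) * fst (revT T s)).
    { intros s Hs. apply ival_rev in Hs. specialize (Hpos _ Hs). unfold revT. simpl. lra. }
    destruct (right_unb _ _ _ _ _ _ _ _ (rev_sol _ _ _ _ _ _ _ _ Hsol) (rev_max _ _ _ _ _ _ Hmax) (- sg)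
      ltac:(destruct Hsg; [right|left]; lra) Hpos' (- K)) as [s [Hs1 Hs2]].
    exists (- s). split. apply ival_rev; auto. lra. }
  assert (Surj : forall t, exists s, in_ival al be s /\ fst (X s) = t).
  { intros t. destruct (Rt (sg * t)) as [sh [Hsh1 Hsh2]]. destruct (Lt (sg * t)) as [sl [Hsl1 Hsl2]].
    destruct (Rle_or_lt sl sh) as [Hlh|Hlh].
    - destruct (ivt_seg (fun u => sg * fst (X u) - sg * t) sl sh Hlh) as [z [Hz1 Hz2]].
      + intros u Hu. apply continuity_pt_minus. 2: apply continuity_pt_const; intros ? ?; auto.
        apply (cont_of_der _ _ (sg * fst (T u))). apply is_derive_scal.
        apply (s_dX1 _ _ _ _ _ _ _ _ Hsol). apply (ival_conv _ _ sl sh); auto.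
      + lra.
      + exists z. split. apply (ival_conv _ _ sl sh); auto.
        apply (Rmult_eq_reg_l sg). lra. destruct Hsg; lra.
    - destruct (s_mono _ _ _ _ _ _ _ _ Hsol sg sh sl Hsg Hpos Hsh1 Hsl1 ltac:(lra)) as [M1 _].
      exists sh. split; auto. apply (Rmult_eq_reg_l sg). lra. destruct Hsg; lra. }
  assert (Habs : forall x, Rabs (sg * x) = Rabs x).
  { intros x. rewrite Rabs_mult. destruct Hsg; subst. rewrite Rabs_R1; ring. rewrite (Rabs_left (-1)) by lra; ring. }
  assert (Inj : forall s s', in_ival al be s -> in_ival al be s' -> Rabs (s - s') <= Rabs (fst (X s) - fst (X s'))).
  { intros s s' Hs Hs'. destruct (Rle_or_lt s s') as [H|H].
    - destruct (s_mono _ _ _ _ _ _ _ _ Hsol sg s s' Hsg Hpos Hs Hs' H) as [M1 _].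
      rewrite Rabs_minus_sym, (Rabs_minus_sym (fst (X s))). rewrite Rabs_pos_eq by lra.
      rewrite <- Habs. eapply Rle_trans; [|apply Rle_abs]. lra.
    - destruct (s_mono _ _ _ _ _ _ _ _ Hsol sg s' s Hsg Hpos Hs' Hs ltac:(lra)) as [M1 _].
      rewrite Rabs_pos_eq by lra.
      rewrite <- Habs. eapply Rle_trans; [|apply Rle_abs]. lra. }
  set (g := fun t => proj1_sig (constructive_indefinite_description _ (Surj t))).
  assert (Hg : forall t, in_ival al be (g t) /\ fst (X (g t)) = t).
  { intros t. unfold g. destruct (constructive_indefinite_description _ (Surj t)) as [s Hs]. simpl. auto. }
  assert (Hgx : forall s, in_ival al be s -> g (fst (X s)) = s).
  { intros s Hs. destruct (Hg (fst (X s))) as [H1 H2]. pose proof (Inj _ _ H1 Hs). rewrite H2 in H.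
    rewrite Rminus_diag, Rabs_R0 in H. pose proof (Rabs_pos (g (fst (X s)) - s)).
    assert (Rabs (g (fst (X s)) - s) = 0) by lra. apply Rabs_eq_0 in H3. lra. }
  assert (Hgl : forall t t', Rabs (g t - g t') <= 1 * Rabs (t - t')).
  { intros t t'. rewrite Rmult_1_l. destruct (Hg t) as [A1 A2]. destruct (Hg t') as [B1 B2].
    pose proof (Inj _ _ A1 B1). rewrite A2, B2 in H. auto. }
  exists (fun t => snd (X (g t))).
  assert (Hd : forall t, is_derive (fun u => snd (X (g u))) t (/ fst (T (g t)) * snd (T (g t)))).
  { intros t. destruct (Hg t) as [A1 A2].
    assert (Dg : is_derive g t (/ fst (T (g t)))).
    { apply (inv_der (fun s => fst (X s)) g t).
      - apply (lip_cont g 1 Hgl).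
      - apply filter_forall. intros u. apply (Hg u).
      - apply (s_dX1 _ _ _ _ _ _ _ _ Hsol). auto.
      - specialize (Hpos _ A1). intro E. rewrite E in Hpos. lra. }
    apply (is_derive_comp (fun s => snd (X s)) g t). apply (s_dX2 _ _ _ _ _ _ _ _ Hsol). auto. auto. }
  split; [|split; auto].
  - intros t. split. exists (/ fst (T (g t)) * snd (T (g t))). auto.
    assert (ED : Derive (fun u : R => snd (X (g u))) t = / fst (T (g t)) * snd (T (g t)))
      by (apply is_derive_unique; apply Hd).
    rewrite ED.
    destruct (Hg t) as [A1 _].
    destruct (s_T2_lt _ _ _ _ _ _ _ _ Hsol sg (g t) Hsg A1 (Hpos _ A1)) as [L1 L2].
    rewrite Rabs_mult, Rabs_inv.
    assert (E : Rabs (fst (T (g t))) = sg * fst (T (g t))).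
    { destruct Hsg; subst. rewrite Rabs_pos_eq; lra. rewrite Rabs_left; lra. }
    rewrite E. apply (Rmult_lt_reg_l (sg * fst (T (g t)))). lra.
    rewrite <- Rmult_assoc, Rinv_r by lra. lra.
  - intros s Hs. rewrite Hgx; auto.
Qed.
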